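(* Assume (A1)–(A2) and $N\geq 1$ (with $N\ge \max\{1,\|f\|_\infty/2\}$ as in the setting of the scheme), and let $v_n^h$ and $v^h$ be as in the context. Then there exists a universal constant $C>0$ such that for all $n\geq 0$ and $R\geq 1$, \[ \sup_{t \in [0,T]}\int_{B_R}\left|\alpha(t,x,\nabla^h v^h_n(t,x))- \alpha(t,x,\nabla^h v^h(t,x))\right|^2\,dx\leq C2^{-n}\exp\left[C\exp(CT)/h\right]R^d, \] where $B_R$ is the ball of radius $R$ centered at the origin.
   Context: Let $d,m\ge1$, $T\ge 1$, and let $A\subset\mathbb{R}^m$ be compact. Let $c:[0,T]\times\mathbb{R}^d\times A\to\mathbb{R}$, $f:[0,T]\times\mathbb{R}^d\times A\to\mathbb{R}^d$, $q:\mathbb{R}^d\to\mathbb{R}$. For $(t,x,p)$ let $\alpha(t,x,p)=\operatorname{argmin}_{a\in A}[c(t,x,a)+p\cdot f(t,x,a)]$, assumed to be the unique minimizer, and $H(t,x,p)=\min_{a\in A}[c(t,x,a)+p\cdot f(t,x,a)]$. Assumptions: (A1) $c,f,q$ are uniformly bounded and Lipschitz continuous in all their variables; (A2) $\alpha(\cdot,\cdot,\cdot)$ and a given continuous initial policy $\alpha_0:\mathbb{R}\times\mathbb{R}^d\to A$ are uniformly Lipschitz continuous in all their variables. $\|f\|_\infty=\sup|f|$. For $\varphi:\mathbb{R}^d\to\mathbb{R}$, $h\neq0$ and standard basis vectors $e_i$: $\nabla^h\varphi(x)=\big(\frac{\varphi(x+he_i)-\varphi(x-he_i)}{2h}\big)_{i=1}^d$,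 $\Delta^h\varphi(x)=\sum_{i=1}^d\frac{\varphi(x+he_i)-2\varphi(x)+\varphi(x-he_i)}{h^2}$; for functions of $(t,x)$ these act in $x$. Semi-discrete policy iteration: fix $h\in(0,1)$ and $N\ge\max\{1,\|f\|_\infty/2\}$; for $n=0,1,\dots$, $v_n^h$ solves $\partial_t v_n^h+c(t,x,\alpha_n(t,x))+\nabla^h v_n^h\cdot f(t,x,\alpha_n(t,x))=-Nh\Delta^h v_n^h$ in $(0,T)\times\mathbb{R}^d$, $v_n^h(T,x)=q(x)$, and then $\alpha_{n+1}(t,x)=\alpha(t,x,\nabla^h v_n^h(t,x))$. The function $v^h$ solves $\partial_t v^h+H(t,x,\nabla^h v^h)=-Nh\Delta^h v^h$ in $(0,T)\times\mathbb{R}^d$, $v^h(T,x)=q(x)$. A constant is universal if it depends only on $d$, $N$ and the constants in (A1)–(A2). *)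

(* Defs.v *)
From HB Require Import structures.
From mathcomp Require Import all_boot all_order all_algebra.
From mathcomp Require Import all_classical all_reals all_analysis.
Set Implicit Arguments. Unset Strict Implicit. Unset Printing Implicit Defensive.
Import Order.TTheory GRing.Theory Num.Theory.
Import numFieldNormedType.Exports.
Local Open Scope classical_set_scope.
Local Open Scope ring_scope.

Section Defs.
Variable R : realType.

Definition enorm (k : nat) (v : 'rV[R]_k) : R := Num.sqrt (\sum_i (v 0 i) ^+ 2).
Definition dotp (k : nat) (u v : 'rV[R]_k) : R := \sum_i u 0 i * v 0 i.

Definition evec (d : nat) (i : 'I_d) : 'rV[R]_d := delta_mx 0 i.

Definition gradh (d : nat) (h : R) (phi : 'rV[R]_d -> R) (x : 'rV[R]_d) : 'rV[R]_d :=
  \row_i ((phi (x + h *: evec i) - phi (x - h *: evec i)) / (2 * h)).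
Definition laph (d : nat) (h : R) (phi : 'rV[R]_d -> R) (x : 'rV[R]_d) : R :=
  \sum_i ((phi (x + h *: evec i) - 2 * phi x + phi (x - h *: evec i)) / (h ^+ 2)).

Definition fcons (k : nat) (a : R) (y : 'I_k -> R) : 'I_k.+1 -> R :=
  fun i => match unlift ord0 i with None => a | Some j => y j end.

(* Lebesgue integral over R^k of a nonnegative extended function, computed as
   an iterated one-dimensional Lebesgue integral (Tonelli). *)
Fixpoint iint (k : nat) : (('I_k -> R) -> \bar R) -> \bar R :=
  match k return (('I_k -> R) -> \bar R) -> \bar R with
  | 0 => fun g => g (fun _ => 0)
  | k'.+1 => fun g =>
      (\int[@lebesgue_measure R]_(a in [set: R]) iint (fun y => g (fcons a y)))%E
  end.
Definition integral_Rd (k : nat) (g : 'rV[R]_k -> \bar R) : \bar R :=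
  iint (fun y => g (\row_i y i)).

(* Hamiltonian H(t,x,p) = min_a [c + p.f] = value at the (unique) minimizer alpha *)
Definition Ham (d m : nat) (c : R -> 'rV[R]_d -> 'rV[R]_m -> R)
  (f : R -> 'rV[R]_d -> 'rV[R]_m -> 'rV[R]_d)
  (alpha : R -> 'rV[R]_d -> 'rV[R]_d -> 'rV[R]_m) (t : R) (x p : 'rV[R]_d) : R :=
  c t x (alpha t x p) + dotp p (f t x (alpha t x p)).

Definition policy (d m : nat) (alpha0 : R -> 'rV[R]_d -> 'rV[R]_m)
  (alpha : R -> 'rV[R]_d -> 'rV[R]_d -> 'rV[R]_m) (h : R)
  (v : nat -> R -> 'rV[R]_d -> R) (n : nat) : R -> 'rV[R]_d -> 'rV[R]_m :=
  match n with
  | 0 => alpha0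
  | n'.+1 => fun t x => alpha t x (gradh h (v n' t) x)
  end.

Definition solves (d : nat) (T N h : R) (q : 'rV[R]_d -> R)
  (F : R -> 'rV[R]_d -> ('rV[R]_d -> R) -> R) (w : R -> 'rV[R]_d -> R) : Prop :=
  (exists M : R, forall t x, 0 <= t <= T -> `|w t x| <= M) /\
  (forall x, {within `[0, T], continuous (fun s => w s x)}) /\
  (forall t x, 0 < t < T ->
     derivable (fun s => w s x) t 1 /\
     'D_1 (fun s => w s x) t + F t x (w t) = - (N * h) * laph h (w t) x) /\
  (forall x, w T x = q x).

End Defs.

(* Main.v *)
Require Import Defs.
From HB Require Import structures.
From mathcomp Require Import all_boot all_order all_algebra.
From mathcomp Require Import all_classical all_reals all_analysis.
From mathcomp Require Import ring lra.
Import Order.TTheory GRing.Theory Num.Theory.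
Import numFieldNormedType.Exports.
Local Open Scope classical_set_scope.
Local Open Scope ring_scope.

Section Core.
Variable R : realType.
Variable d : nat.
Variables (T lam D : R) (z : R -> 'rV[R]_d -> R).
Hypothesis lam0 : 0 <= lam.
Hypothesis D0 : 0 <= D.
Hypothesis zc : forall x, {within `[0, T], continuous (fun s => z s x)}.
Hypothesis zd : forall r x, 0 < r < T -> derivable (fun s => z s x) r 1.
Hypothesis zD : forall r x, 0 < r < T -> `|'D_1 (fun s => z s x) r| <= D.
Hypothesis zL : forall r x m, 0 < r < T -> (forall y, z r y <= m) ->
  - lam * (m - z r x) <= 'D_1 (fun s => z s x) r.
Hypothesis zT : forall x, z T x <= 0.

Lemma core_mvt a b x : 0 <= a -> a < b -> b <= T ->
  exists2 r, a < r < b & z b x - z a x = 'D_1 (fun s => z s x) r * (b - a).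
Proof.
move=> a0 altb bT.
have H1 : forall r, r \in `]a, b[ -> is_derive r 1 (fun s => z s x) ('D_1 (fun s => z s x) r).
  move=> r; rewrite in_itv /= => /andP[ar rb]; apply: derivableP; apply: zd.
  apply/andP; split; [exact: le_lt_trans ar | exact: lt_le_trans bT].
have H2 : {within `[a, b], continuous (fun s => z s x)}.
  apply: continuous_subspaceW (zc x) => s /=; rewrite !in_itv /= => /andP[aS sb].
  apply/andP; split; [exact: le_trans aS | exact: le_trans bT].
have [r rin eq] := @MVT R (fun s => z s x) ('D_1 (fun s => z s x)) a b altb H1 H2.
by exists r => //; move: rin; rewrite in_itv.
Qed.

Lemma core_lip a b x : 0 <= a -> a <= b -> b <= T -> `|z b x - z a x| <= D * (b - a).
Proof.
move=> a0 ab bT; case: (ltgtP a b) ab => // [altb|<-] _; last first.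
  by rewrite !subrr mulr0 normr0.
have [r /andP[ar rb] ->] := core_mvt a b x a0 altb bT.
rewrite normrM (ger0_norm (_ : 0 <= b - a)); last by rewrite subr_ge0 ltW.
apply: ler_wpM2r; first by rewrite subr_ge0 ltW.
apply: zD; apply/andP; split; [exact: le_lt_trans ar | exact: lt_le_trans bT].
Qed.

Lemma core_step t del m : 0 < del -> 0 <= t - del -> t <= T -> lam * del <= 1 ->
  (forall y, z t y <= m) -> forall x, z (t - del) x <= m + 2 * lam * D * del ^+ 2.
Proof.
move=> del0 a0 tT ld zm x.
have altb : t - del < t by rewrite ltrBlDr ltrDl.
have [r /andP[ar rb] eq] := core_mvt (t - del) t x a0 altb tT.
have r0T : 0 < r < T by apply/andP; split; [exact: le_lt_trans ar | exact: lt_le_trans tT].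
have hr : forall y, z r y <= m + D * del.
  move=> y; have := core_lip r t y (le_trans a0 (ltW ar)) (ltW rb) tT.
  move=> /ler_normlP [H _]; have := zm y.
  have : D * (t - r) <= D * del.
    by apply: ler_wpM2l => //; rewrite lerBlDr -lerBlDl ltW.
  lra.
have hx : z t x - D * del <= z r x.
  have := core_lip r t x (le_trans a0 (ltW ar)) (ltW rb) tT.
  move=> /ler_normlP [_ H].
  have : D * (t - r) <= D * del.
    by apply: ler_wpM2l => //; rewrite lerBlDr -lerBlDl ltW.
  lra.
have hL := zL r x _ r0T hr.
have e2 : t - (t - del) = del by rewrite opprB addrC subrK.
rewrite e2 in eq.
have hzt := zm x.
move: ('D_1 (fun s => z s x) r) eq hL => Dr eq hL.
have : z (t - del) x = z t x - Dr * del by move: eq; lra.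
move=> ->.
have h1 : - Dr * del <= lam * (m + D * del - z r x) * del.
  by apply: ler_wpM2r; [exact: ltW | move: hL; lra].
have h2 : lam * (m + D * del - z r x) * del <= lam * del * (m + 2 * D * del - z t x).
  rewrite mulrAC; apply: ler_wpM2l; first by apply: mulr_ge0 => //; exact: ltW.
  lra.
have h3 : lam * del * (m - z t x) <= m - z t x.
  by rewrite -[leRHS]mul1r; apply: ler_wpM2r => //; rewrite subr_ge0.
have h4 : lam * del * (m + 2 * D * del - z t x) = lam * del * (m - z t x) + 2 * lam * D * del ^+ 2.
  by rewrite expr2; ring.
lra.
Qed.

Lemma core_main t x : 0 <= t <= T -> z t x <= 0.
Proof.
move=> /andP[t0 tT].
case: (ltgtP t T) tT => // [tltT|->] _; last exact: zT.
rewrite leNgt; apply/negP => hz.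
set S := T - t.
have S0 : 0 < S by rewrite subr_gt0.
set X := lam * S + 2 * lam * D * S ^+ 2 / z t x + 1.
have X0 : 0 <= X.
  rewrite /X; apply: addr_ge0; last exact: ler01.
  apply: addr_ge0; first by apply: mulr_ge0 => //; exact: ltW.
  apply: divr_ge0; last exact: ltW.
  by apply: mulr_ge0; [apply: mulr_ge0; [apply: mulr_ge0 => // | ] | apply: exprn_ge0; exact: ltW].
have := archi_boundP X0; set n := Num.bound X => Xn.
set nr : R := n%:R in Xn.
have nr0 : 0 < nr by exact: le_lt_trans X0 Xn.
set del := S / nr.
have del0 : 0 < del by apply: divr_gt0.
have lS : 0 <= lam * S by apply: mulr_ge0 => //; exact: ltW.
have lQ : 0 <= 2 * lam * D * S ^+ 2 / z t x.
  apply: divr_ge0; last exact: ltW.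
  by apply: mulr_ge0; [apply: mulr_ge0; [apply: mulr_ge0 => // | ] | apply: exprn_ge0; exact: ltW].
have ld : lam * del <= 1.
  rewrite /del mulrA ler_pdivrMr // mul1r.
  by apply: ltW; apply: le_lt_trans Xn; rewrite /X; lra.
have ind : forall k, (k <= n)%N -> forall y,
    z (T - k%:R * del) y <= k%:R * (2 * lam * D * del ^+ 2).
  elim=> [|k IH] kn y.
    by rewrite !mul0r subr0 zT.
  have kn' : (k <= n)%N by apply: leq_trans kn.
  have eqk : T - k.+1%:R * del = (T - k%:R * del) - del.
    by rewrite -[k.+1%:R]natr1; ring.
  have kdel : k.+1%:R * del <= S.
    rewrite /del mulrA ler_pdivrMr // mulrC ler_wpM2l //; first exact: ltW.
    by rewrite ler_nat.
  rewrite eqk.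
  apply: le_trans (core_step (T - k%:R * del) del (k%:R * (2 * lam * D * del ^+ 2)) del0 _ _ ld (IH kn') y) _.
  - by rewrite -eqk; move: kdel; rewrite /S; lra.
  - by rewrite lerBlDr lerDl; apply: mulr_ge0; [exact: ler0n | exact: ltW].
  - by rewrite -[k.+1%:R]natr1; lra.
have := ind n (leqnn n) x.
have -> : T - nr * del = t by rewrite /del mulrC divfK ?gt_eqF // /S; ring.
move=> hle.
have : nr * (2 * lam * D * del ^+ 2) < z t x.
  have -> : nr * (2 * lam * D * del ^+ 2) = (2 * lam * D * S ^+ 2 / z t x) / nr * z t x.
    rewrite /del; field; apply/andP; split; rewrite gt_eqF //.
  rewrite -[ltRHS]mul1r ltr_pM2r // ltr_pdivrMr // mul1r.
  by apply: le_lt_trans Xn; rewrite /X; lra.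
by move: hle; lra.
Qed.
End Core.

Section Ops.
Variable R : realType.
Variable d : nat.
Implicit Types (phi psi : 'rV[R]_d -> R) (x b : 'rV[R]_d).

Lemma term_up (h N m a c p bb : R) : 0 < h -> `|bb| <= 2 * N -> a <= m -> c <= m ->
  (a - c) / (2 * h) * bb + N * h * ((a - 2 * p + c) / h ^+ 2) <= 2 * N / h * (m - p).
Proof.
move=> h0 hb am cm.
have -> : (a - c) / (2 * h) * bb + N * h * ((a - 2 * p + c) / h ^+ 2)
   = ((a - p) * (2 * N + bb) + (c - p) * (2 * N - bb)) / (2 * h).
  by field; rewrite gt_eqF.
have -> : 2 * N / h * (m - p) = (4 * N * (m - p)) / (2 * h).
  by field; rewrite gt_eqF.
rewrite ler_pM2r; last by rewrite invr_gt0 mulr_gt0.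
move: hb => /ler_normlP [hb1 hb2].
have h1 : 0 <= (m - a) * (2 * N + bb) by apply: mulr_ge0; lra.
have h2 : 0 <= (m - c) * (2 * N - bb) by apply: mulr_ge0; lra.
lra.
Qed.

Lemma term_lo (h N m a c p bb : R) : 0 < h -> `|bb| <= 2 * N -> m <= a -> m <= c ->
  2 * N / h * (m - p) <= (a - c) / (2 * h) * bb + N * h * ((a - 2 * p + c) / h ^+ 2).
Proof.
move=> h0 hb am cm.
have -> : (a - c) / (2 * h) * bb + N * h * ((a - 2 * p + c) / h ^+ 2)
   = ((a - p) * (2 * N + bb) + (c - p) * (2 * N - bb)) / (2 * h).
  by field; rewrite gt_eqF.
have -> : 2 * N / h * (m - p) = (4 * N * (m - p)) / (2 * h).
  by field; rewrite gt_eqF.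
rewrite ler_pM2r; last by rewrite invr_gt0 mulr_gt0.
move: hb => /ler_normlP [hb1 hb2].
have h1 : 0 <= (a - m) * (2 * N + bb) by apply: mulr_ge0; lra.
have h2 : 0 <= (c - m) * (2 * N - bb) by apply: mulr_ge0; lra.
lra.
Qed.

Definition Lop (h N : R) phi b x := dotp (gradh h phi x) b + N * h * laph h phi x.

Lemma Lop_sum h N phi b x : Lop h N phi b x =
  \sum_i ((phi (x + h *: evec R i) - phi (x - h *: evec R i)) / (2 * h) * b 0 i +
          N * h * ((phi (x + h *: evec R i) - 2 * phi x + phi (x - h *: evec R i)) / h ^+ 2)).
Proof.
rewrite /Lop /dotp /laph mulr_sumr -big_split /=.
by apply: eq_bigr => i _; rewrite /gradh mxE.
Qed.

Lemma Lop_up h N m phi b x : 0 < h -> (forall i, `|b 0 i| <= 2 * N) ->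
  (forall y, phi y <= m) -> Lop h N phi b x <= d%:R * (2 * N / h) * (m - phi x).
Proof.
move=> h0 hb hm; rewrite Lop_sum.
have -> : d%:R * (2 * N / h) * (m - phi x) = \sum_(i < d) (2 * N / h * (m - phi x)).
  by rewrite sumr_const card_ord -mulr_natl; ring.
by apply: ler_sum => i _; apply: term_up.
Qed.

Lemma Lop_lo h N m phi b x : 0 < h -> (forall i, `|b 0 i| <= 2 * N) ->
  (forall y, m <= phi y) -> d%:R * (2 * N / h) * (m - phi x) <= Lop h N phi b x.
Proof.
move=> h0 hb hm; rewrite Lop_sum.
have -> : d%:R * (2 * N / h) * (m - phi x) = \sum_(i < d) (2 * N / h * (m - phi x)).
  by rewrite sumr_const card_ord -mulr_natl; ring.
by apply: ler_sum => i _; apply: term_lo.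
Qed.

Lemma Lop_norm h N M phi b x : 0 < h -> 0 <= N -> (forall i, `|b 0 i| <= 2 * N) ->
  (forall y, `|phi y| <= M) -> `|Lop h N phi b x| <= 2 * (d%:R * (2 * N / h)) * M.
Proof.
move=> h0 N0 hb hM.
have lam0 : 0 <= d%:R * (2 * N / h).
  by apply: mulr_ge0; [exact: ler0n | apply: divr_ge0; [lra | exact: ltW]].
have hu : forall y, phi y <= M by move=> y; have := hM y; rewrite ler_norml => /andP[].
have hl : forall y, - M <= phi y by move=> y; have := hM y; rewrite ler_norml => /andP[].
have u := Lop_up h N M phi b x h0 hb hu.
have l := Lop_lo h N (- M) phi b x h0 hb hl.
have p1 := hl x. have p2 := hu x.
have a1 : d%:R * (2 * N / h) * (M - phi x) <= d%:R * (2 * N / h) * (2 * M).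
  by apply: ler_wpM2l => //; lra.
have a2 : d%:R * (2 * N / h) * (- (2 * M)) <= d%:R * (2 * N / h) * (- M - phi x).
  by apply: ler_wpM2l => //; lra.
rewrite ler_norml; apply/andP; split; lra.
Qed.

Lemma Lop_B h N phi psi b x :
  Lop h N (fun y => phi y - psi y) b x = Lop h N phi b x - Lop h N psi b x.
Proof.
rewrite !Lop_sum -sumrB; apply: eq_bigr => i _.
ring.
Qed.

Lemma Lop_const h N phi (k : R) b x :
  Lop h N (fun y => phi y - k) b x = Lop h N phi b x.
Proof.
rewrite !Lop_sum; apply: eq_bigr => i _; ring.
Qed.

Lemma gradh_bound h M phi x i : 0 < h -> (forall y, `|phi y| <= M) ->
  `|gradh h phi x 0 i| <= M / h.
Proof.
move=> h0 hM; rewrite /gradh mxE normrM.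
have h2 : 0 < 2 * h by rewrite mulr_gt0.
rewrite (gtr0_norm (_ : 0 < (2 * h)^-1)); last by rewrite invr_gt0.
have : `|phi (x + h *: evec R i) - phi (x - h *: evec R i)| <= 2 * M.
  by apply: le_trans (ler_normB _ _) _; have := hM (x + h *: evec R i);
    have := hM (x - h *: evec R i); lra.
move=> H; have -> : M / h = (2 * M) / (2 * h) by field; rewrite gt_eqF.
by apply: ler_wpM2r => //; rewrite invr_ge0 ltW.
Qed.

Lemma dotp_bound (u w : 'rV[R]_d) : `|dotp u w| <= \sum_i `|u 0 i| * `|w 0 i|.
Proof.
rewrite /dotp; apply: le_trans (ler_norm_sum _ _ _) _.
by apply: ler_sum => i _; rewrite normrM.
Qed.

Lemma comp_le_enorm (u : 'rV[R]_d) i : `|u 0 i| <= enorm u.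
Proof.
rewrite /enorm -(sqrtr_sqr (u 0 i)); rewrite ler_sqrt; last first.
  by apply: sumr_ge0 => j _; exact: sqr_ge0.
rewrite (bigD1 i) //= lerDl; apply: sumr_ge0 => j _; exact: sqr_ge0.
Qed.
End Ops.
Arguments Lop {R d}.

Section Psi.
Variable R : realType.
Lemma psi_derive (be ga T s : R) : is_derive s 1 (fun s => be * expR (ga * (T - s)))
  (- (ga * (be * expR (ga * (T - s))))).
Proof.
apply: trigger_derive.
by rewrite /GRing.scale /=; ring.
Qed.


Lemma psi_cont (be ga T : R) : continuous (fun s : R => be * expR (ga * (T - s))).
Proof.
move=> s; apply: differentiable_continuous; apply/derivable1_diffP.
exact: (@ex_derive _ _ _ _ _ _ _ (psi_derive be ga T s)).
Qed.

Lemma MP (d : nat) (T N h be ga : R) (u : R -> 'rV[R]_d -> R)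
  (b : R -> 'rV[R]_d -> 'rV[R]_d) (g : R -> 'rV[R]_d -> R) :
  0 < h -> 0 <= N -> 0 <= ga -> 0 <= be ->
  (exists Mu, forall t x, 0 <= t <= T -> `|u t x| <= Mu) ->
  (forall x, {within `[0, T], continuous (fun s => u s x)}) ->
  (forall t x, 0 < t < T -> derivable (fun s => u s x) t 1 /\ 'D_1 (fun s => u s x) t + Lop h N (u t) (b t x) x = - g t x) ->
  (forall t x i, 0 < t < T -> `|b t x 0 i| <= 2 * N) ->
  (exists G, forall t x, 0 < t < T -> `|g t x| <= G) ->
  (forall t x, 0 < t < T -> g t x <= ga * (be * expR (ga * (T - t)))) ->
  (forall x, u T x <= be) ->
  forall t x, 0 <= t <= T -> u t x <= be * expR (ga * (T - t)).
Proof.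
move=> h0 N0 ga0 be0 [Mu hMu] uc ueq hb [G hG] hg uT t x tT.
set psi := fun s : R => be * expR (ga * (T - s)).
set lam := d%:R * (2 * N / h).
have lam0 : 0 <= lam.
  by apply: mulr_ge0; [exact: ler0n | apply: divr_ge0; [lra | exact: ltW]].
set z := fun s y => u s y - psi s.
have dpsi : forall s, 'D_1 psi s = - (ga * psi s).
  by move=> s; rewrite /psi (@derive_val _ _ _ _ _ _ _ (psi_derive be ga T s)).
have dpsi' : forall s, derivable psi s 1 := fun s => @ex_derive _ _ _ _ _ _ _ (psi_derive be ga T s).
have dz : forall r y, 0 < r < T -> derivable (fun s => z s y) r 1 /\ 'D_1 (fun s => z s y) r = - g r y - Lop h N (u r) (b r y) y + ga * psi r.
  move=> r y rT; have [du eq] := ueq r y rT.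
  have dB : derivable (fun s => z s y) r 1 by apply: derivableB.
  split => //.
  rewrite (_ : (fun s => z s y) = (fun s => u s y) - psi) //.
  rewrite deriveB // dpsi; lra.
have hpsi : forall r, 0 < r < T -> 0 <= ga * psi r <= ga * (be * expR (ga * T)).
  move=> r /andP[r0 rT]; apply/andP; split.
    by apply: mulr_ge0 => //; apply: mulr_ge0 => //; exact: expR_ge0.
  apply: ler_wpM2l => //; apply: ler_wpM2l => //; rewrite ler_expR.
  by apply: ler_wpM2l => //; lra.
have Mu0 : 0 <= Mu.
  by apply: le_trans (hMu T x _); [exact: normr_ge0 | apply/andP; split; [case/andP: tT => ? ?; exact: le_trans (_ : 0 <= t) _ | done]].
set D := `|G| + 2 * lam * Mu + ga * (be * expR (ga * T)).
have G0 : 0 <= `|G| := normr_ge0 G.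
have GG : G <= `|G| := ler_norm G.
have D0 : 0 <= D.
  rewrite /D; apply: addr_ge0; [apply: addr_ge0 => //|].
    by apply: mulr_ge0 => //; apply: mulr_ge0 => //.
  by apply: mulr_ge0 => //; apply: mulr_ge0 => //; exact: expR_ge0.
suff : z t x <= 0 by rewrite /z /psi; lra.
apply: (@core_main R d T lam D z lam0 D0) => //.
- move=> y s; apply: continuousB; first exact: uc.
  exact: (continuous_subspaceT (psi_cont be ga T)).
- by move=> r y rT; case: (dz r y rT).
- move=> r y rT; have [_ ->] := dz r y rT.
  have hu : forall y', `|u r y'| <= Mu by move=> y'; apply: hMu; case/andP: rT => ? ?; apply/andP; split; exact: ltW.
  have := Lop_norm R d h N Mu (u r) (b r y) y h0 N0 (fun i => hb r y i rT) hu.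
  have := hG r y rT; have := hpsi r rT; rewrite -/lam.
  move=> /andP[p1 p2] g1 L1.
  rewrite /D; move: g1 L1; rewrite !ler_norml => /andP[? ?] /andP[? ?]; apply/andP; split; lra.
- move=> r y m rT hm; have [_ ->] := dz r y rT.
  have hm' : forall y', u r y' <= m + psi r by move=> y'; have := hm y'; rewrite /z; lra.
  have := Lop_up R d h N (m + psi r) (u r) (b r y) y h0 (fun i => hb r y i rT) hm'.
  rewrite -/lam => L1.
  have g1 : g r y <= ga * psi r := hg r y rT.
  rewrite /z /=.
  have e : lam * (m + psi r - u r y) = lam * (m - (u r y - psi r)) by ring.
  lra.
- by move=> y; rewrite /z /psi subrr mulr0 expR0 mulr1; have := uT y; lra.
Qed.
End Psi.

Section Integ.
Variable R : realType.
Local Notation mu := (@lebesgue_measure R).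

Lemma int_mono (f g : R -> \bar R) : (forall x, (0 <= f x)%E) -> (forall x, (f x <= g x)%E) ->
  (\int[mu]_(x in [set: R]) f x <= \int[mu]_(x in [set: R]) g x)%E.
Proof.
move=> f0 fg; have g0 x : (0 <= g x)%E := le_trans (f0 x) (fg x).
rewrite !ge0_integralTE //; apply: ereal_sup_le => y [h hf <-]; exists h => //= x.
exact: le_trans (hf x) (fg x).
Qed.

Lemma int_step (c Rr : R) : 0 <= c -> 0 <= Rr ->
  (\int[mu]_(a in [set: R]) (if `|a| <= Rr then c else 0)%:E = (c * (2 * Rr))%:E)%E.
Proof.
move=> c0 Rr0.
transitivity (\int[mu]_(a in [set` `[(- Rr)%R, Rr%R]]) (cst c%:E) a)%E.
  rewrite [RHS]integral_mkcond; apply: eq_integral => a _ /=.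
  rewrite /patch /= ler_norml; case: ifPn => H.
    by rewrite mem_set //= in_itv /=.
  by rewrite memNset //= in_itv /=; apply/negP.
rewrite integral_cst; last exact: measurable_itv.
have E := lebesgue_measure_itv `[(- Rr)%R, Rr%R].
rewrite /= in E.
transitivity (c%:E * (if (- Rr < Rr)%R then (Rr%:E - (- Rr)%:E) else 0))%E.
  by congr (_ * _)%E; exact: E.
case: ifPn => H.
  by rewrite -EFinN -EFinD -EFinM opprK; congr (_%:E); ring.
have -> : Rr = 0.
  by move: H; rewrite ltNge negbK => H; lra.
by rewrite mule0 !mulr0.
Qed.

Lemma iint_ge0 k (G : ('I_k -> R) -> \bar R) : (forall y, (0 <= G y)%E) -> (0 <= iint G)%E.
Proof.
elim: k G => [|k IH] G G0 /=; first exact: G0.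
by apply: integral_ge0 => a _; apply: IH => y; exact: G0.
Qed.

Lemma iint_bound k (G : ('I_k -> R) -> \bar R) (Q Rr : R) : 0 <= Q -> 0 <= Rr ->
  (forall y, (0 <= G y)%E) ->
  (forall y, (G y <= (if [forall i, `|y i| <= Rr] then Q else 0)%:E)%E) ->
  (iint G <= (Q * (2 * Rr) ^+ k)%:E)%E.
Proof.
elim: k G Q => [|k IH] G Q Q0 Rr0 G0 GQ /=.
  apply: le_trans (GQ _) _; rewrite expr0 mulr1.
  have -> : [forall i : 'I_0, `|(fun _ : 'I_0 => (0:R)) i| <= Rr] by apply/forallP => -[].
  by [].
have inner : forall a, (iint (fun y => G (fcons a y)) <=
    (if `|a| <= Rr then Q * (2 * Rr) ^+ k else 0)%:E)%E.
  move=> a; case: ifPn => Ha.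
    apply: (IH (fun y => G (fcons a y)) Q Q0 Rr0 (fun y => G0 _)) => y.
    apply: le_trans (GQ _) _.
    case E : [forall j, `|y j| <= Rr]; first by case: ifP.
    case: ifPn => // /forallP H; move/negP: E; case; apply/forallP => j.
    by have := H (lift ord0 j); rewrite /fcons liftK.
  have := IH (fun y => G (fcons a y)) 0 (lexx 0) Rr0 (fun y => G0 _).
  rewrite mul0r; apply => y; apply: le_trans (GQ _) _.
  rewrite if_same; case: ifPn => // /forallP H; move: (H ord0); rewrite /fcons unlift_none => Ha'.
  by move: Ha; rewrite Ha'.
apply: le_trans (int_mono _ _ (fun a => @iint_ge0 k _ (fun y => G0 (fcons a y))) inner) _.
rewrite int_step //; last by apply: mulr_ge0 => //; apply: exprn_ge0; lra.
have -> : Q * (2 * Rr) ^+ k.+1 = Q * (2 * Rr) ^+ k * (2 * Rr) by rewrite exprSr; ring.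
by [].
Qed.
End Integ.

Section More.
Variable R : realType.
Variable d : nat.

Definition lsol (T N h : R) (u : R -> 'rV[R]_d -> R) (b : R -> 'rV[R]_d -> 'rV[R]_d)
  (g : R -> 'rV[R]_d -> R) : Prop :=
  (exists M, forall t x, 0 <= t <= T -> `|u t x| <= M) /\
  (forall x, {within `[0, T], continuous (fun s => u s x)}) /\
  (forall t x, 0 < t < T -> derivable (fun s => u s x) t 1 /\
      'D_1 (fun s => u s x) t + Lop h N (u t) (b t x) x = - g t x).

Lemma lsol_diff T N h u1 u2 b g1 g2 : lsol T N h u1 b g1 -> lsol T N h u2 b g2 ->
  lsol T N h (fun s y => u1 s y - u2 s y) b (fun s y => g1 s y - g2 s y).
Proof.
move=> [[M1 hM1] [c1 e1]] [[M2 hM2] [c2 e2]]; split; [|split].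
- exists (M1 + M2) => t x tT; apply: le_trans (ler_normB _ _) _.
  by apply: lerD; [exact: hM1 | exact: hM2].
- by move=> x s; apply: continuousB; [exact: c1 | exact: c2].
- move=> t x tT; have [d1 q1] := e1 t x tT; have [d2 q2] := e2 t x tT.
  split; first exact: derivableB.
  rewrite (_ : (fun s => u1 s x - u2 s x) = (fun s => u1 s x) - (fun s => u2 s x)) //.
  rewrite deriveB // (Lop_B R d h N (u1 t) (u2 t)); lra.
Qed.

Lemma lsol_zero T N h b : lsol T N h (fun _ _ => 0) b (fun _ _ => 0).
Proof.
split; [|split].
- by exists 0 => t x _; rewrite normr0.
- by move=> x; apply: continuous_subspaceT; exact: cst_continuous.
- move=> t x _; split; first exact: derivable_cst.
  rewrite derive_cst.
  have -> : Lop h N (fun _ : 'rV[R]_d => (0 : R)) (b t x) x = 0.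
    rewrite Lop_sum; apply: big1 => i _; ring.
  by rewrite addr0 oppr0.
Qed.

Lemma MPl (T N h be ga : R) u b g :
  lsol T N h u b g ->
  0 < h -> 0 <= N -> 0 <= ga -> 0 <= be ->
  (forall t x i, 0 < t < T -> `|b t x 0 i| <= 2 * N) ->
  (exists G, forall t x, 0 < t < T -> `|g t x| <= G) ->
  (forall t x, 0 < t < T -> g t x <= ga * (be * expR (ga * (T - t)))) ->
  (forall x, u T x <= be) ->
  forall t x, 0 <= t <= T -> u t x <= be * expR (ga * (T - t)).
Proof.
move=> [hb [hc he]] h0 N0 ga0 be0 hbb hG hg hT.
exact: (@MP R d T N h be ga u b g h0 N0 ga0 be0 hb hc he hbb hG hg hT).
Qed.

Lemma dotp_sub2 (u1 u2 w1 w2 : 'rV[R]_d) :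
  dotp (u1 - u2) (w1 - w2) = dotp u1 w1 - dotp u1 w2 - dotp u2 w1 + dotp u2 w2.
Proof.
rewrite /dotp -sumrB -sumrB -big_split /=; apply: eq_bigr => i _; rewrite !mxE; ring.
Qed.

Lemma gradh_B h (p1 p2 : 'rV[R]_d -> R) x :
  gradh h (fun y => p1 y - p2 y) x = gradh h p1 x - gradh h p2 x.
Proof. by apply/rowP => i; rewrite !mxE; ring. Qed.

Lemma enorm_sqr (u : 'rV[R]_d) : enorm u ^+ 2 = \sum_i (u 0 i) ^+ 2.
Proof. by rewrite /enorm sqr_sqrtr //; apply: sumr_ge0 => i _; exact: sqr_ge0. Qed.

Lemma enorm_ge0 (u : 'rV[R]_d) : 0 <= enorm u.
Proof. exact: sqrtr_ge0. Qed.

Lemma enorm_zero : enorm (0 : 'rV[R]_d) = 0.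
Proof. by rewrite /enorm big1 ?sqrtr0 // => i _; rewrite mxE expr0n. Qed.
End More.

Theorem theorem3p3 (R : realType) (d : nat) (N K : R) :
  (0 < d)%N -> 1 <= N -> 0 <= K ->
  exists C : R, 0 < C /\
  forall (m : nat) (T : R) (A : set 'rV[R]_m)
    (c : R -> 'rV[R]_d -> 'rV[R]_m -> R)
    (f : R -> 'rV[R]_d -> 'rV[R]_m -> 'rV[R]_d)
    (q : 'rV[R]_d -> R)
    (alpha : R -> 'rV[R]_d -> 'rV[R]_d -> 'rV[R]_m)
    (alpha0 : R -> 'rV[R]_d -> 'rV[R]_m)
    (h : R) (v : nat -> R -> 'rV[R]_d -> R) (w : R -> 'rV[R]_d -> R),
  (0 < m)%N -> 1 <= T -> compact A -> 0 < h < 1 ->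
  (* (A1): boundedness *)
  (forall t x a, 0 <= t <= T -> A a ->
     `|c t x a| <= K /\ enorm (f t x a) <= K) ->
  (forall x, `|q x| <= K) ->
  (* (A1): Lipschitz continuity in all variables *)
  (forall t s x y a b, 0 <= t <= T -> 0 <= s <= T -> A a -> A b ->
     `|c t x a - c s y b| <= K * (`|t - s| + enorm (x - y) + enorm (a - b)) /\
     enorm (f t x a - f s y b) <= K * (`|t - s| + enorm (x - y) + enorm (a - b))) ->
  (forall x y, `|q x - q y| <= K * enorm (x - y)) ->
  (* N >= max {1, ||f||_oo / 2} *)
  (forall t x a, 0 <= t <= T -> A a -> enorm (f t x a) <= 2 * N) ->
  (* alpha(t,x,p) is the unique minimizer over A of c(t,x,a) + p.f(t,x,a) *)
  (forall t x p, 0 <= t <= T ->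
     A (alpha t x p) /\
     (forall a, A a -> a <> alpha t x p ->
        c t x (alpha t x p) + dotp p (f t x (alpha t x p)) <
        c t x a + dotp p (f t x a))) ->
  (* (A2): Lipschitz continuity of alpha and of the initial policy alpha0 *)
  (forall t s x y p p', 0 <= t <= T -> 0 <= s <= T ->
     enorm (alpha t x p - alpha s y p') <=
       K * (`|t - s| + enorm (x - y) + enorm (p - p'))) ->
  (forall t x, A (alpha0 t x)) ->
  (forall t s x y, enorm (alpha0 t x - alpha0 s y) <= K * (`|t - s| + enorm (x - y))) ->
  (* v n = v_n^h : policy evaluation with policy alpha_n *)
  (forall n, solves T N h q
     (fun t x phi => c t x (policy alpha0 alpha h v n t x)
                     + dotp (gradh h phi x) (f t x (policy alpha0 alpha h v n t x)))
     (v n)) ->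
  (* w = v^h : the semi-discrete HJB equation *)
  solves T N h q (fun t x phi => Ham c f alpha t x (gradh h phi x)) w ->
  forall (n : nat) (t Rr : R), 0 <= t <= T -> 1 <= Rr ->
  (integral_Rd (fun x : 'rV[R]_d =>
     if (enorm x <= Rr)%R then
       ((enorm (alpha t x (gradh h (v n t) x) - alpha t x (gradh h (w t) x))) ^+ 2)%:E
     else 0%E)
   <= (C * 2 ^- n * expR (C * expR (C * T) / h) * Rr ^+ d)%:E)%E.
Proof.
move=> dpos N1 K0.
set dr : R := d%:R.
have dr1 : 1 <= dr by rewrite /dr ler1n.
set C : R := 4 * K ^+ 4 * dr * 2 ^+ d + 4 + 16 * dr * N.
have C4 : 4 + 16 * dr * N <= C.
  have : 0 <= 4 * K ^+ 4 * dr * 2 ^+ d.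
    apply: mulr_ge0; [apply: mulr_ge0; [apply: mulr_ge0; [lra | exact: exprn_ge0] | lra] | exact: exprn_ge0].
  rewrite /C; lra.
exists C; split; first by apply: lt_le_trans C4; nra.
move=> m T A c f q alpha alpha0 h v w m0 T1 cA /andP[h0 h1] hbd hq hlip hqlip hf2N hmin
  hlipa hA0 hlipa0 hv hw n t Rr tT Rr1.
have N0 : 0 <= N by lra.
have hfi : forall t x a i, 0 <= t <= T -> A a -> `|f t x a 0 i| <= 2 * N.
  by move=> t' x a i tT' Aa; apply: le_trans (comp_le_enorm _ _ _ _) (hf2N _ _ _ tT' Aa).
have polA : forall n t x, 0 <= t <= T -> A (policy alpha0 alpha h v n t x).
  by move=> [|n'] t' x tT' /=; [exact: hA0 | exact: (hmin _ _ _ tT').1].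
have minle : forall t x p a, 0 <= t <= T -> A a ->
    c t x (alpha t x p) + dotp p (f t x (alpha t x p)) <= c t x a + dotp p (f t x a).
  move=> t' x p a tT' Aa; have [_ H] := hmin t' x p tT'.
  case: (boolP (a == alpha t' x p)) => [/eqP -> //| /eqP ne].
  exact: ltW (H a Aa ne).
have oT : forall s, 0 < s < T -> 0 <= s <= T.
  by move=> s /andP[s0 sT]; apply/andP; split; apply: ltW.
have vsol : forall n, lsol R d T N h (v n) (fun t x => f t x (policy alpha0 alpha h v n t x))
    (fun t x => c t x (policy alpha0 alpha h v n t x)).
  move=> n'; have [hb [hc [he _]]] := hv n'; split; [exact: hb|split; [exact: hc|]].
  move=> t' x tT'; have [dd E] := he t' x tT'; split => //.
  rewrite /Lop; move: E; lra.
have wsol : forall b, lsol R d T N h w b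
    (fun t x => Ham c f alpha t x (gradh h (w t) x) - dotp (gradh h (w t) x) (b t x)).
  move=> b; have [hb [hc [he _]]] := hw; split; [exact: hb|split; [exact: hc|]].
  move=> t' x tT'; have [dd E] := he t' x tT'; split => //.
  rewrite /Lop; move: E; lra.
have expge1 : forall y : R, 0 <= y -> 1 <= expR y.
  by move=> y y0; apply: le_trans (expR_ge1Dx y); lra.
have bnd : forall u b g, lsol R d T N h u b g ->
    (forall t x i, 0 < t < T -> `|b t x 0 i| <= 2 * N) ->
    (forall t x, 0 < t < T -> `|g t x| <= K) -> (forall x, `|u T x| <= K) ->
    forall t x, 0 <= t <= T -> `|u t x| <= K * expR (1 * (T - t)).
  move=> u b g us hb hg huT t' x tT'.
  have eK : forall s, 0 < s < T -> K <= 1 * (K * expR (1 * (T - s))).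
    move=> s /andP[_ sT]; rewrite mul1r; apply: ler_peMr => //; apply: expge1; lra.
  rewrite ler_norml; apply/andP; split.
    suff : 0 - u t' x <= K * expR (1 * (T - t')) by lra.
    apply: (MPl R d T N h K 1 _ _ _ (lsol_diff R d T N h _ _ b _ _ (lsol_zero R d T N h b) us) h0 N0 ler01 K0 hb) => //.
    - by exists K => s y sT; rewrite distrC subr0; exact: hg.
    - move=> s y sT; apply: le_trans (eK s sT); rewrite sub0r.
      by have := hg s y sT; rewrite ler_norml => /andP[]; lra.
    - by move=> y; rewrite sub0r; have := huT y; rewrite ler_norml => /andP[]; lra.
  apply: (MPl R d T N h K 1 _ _ _ us h0 N0 ler01 K0 hb) => //.
  - by exists K.
  - move=> s y sT; apply: le_trans (eK s sT).
    by have := hg s y sT; rewrite ler_norml => /andP[]; lra.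
  - by move=> y; have := huT y; rewrite ler_norml => /andP[]; lra.
have vbd : forall n t x, 0 <= t <= T -> `|v n t x| <= K * expR (1 * (T - t)).
  move=> n' t' x tT'; apply: (bnd _ _ _ (vsol n')) => //.
  - by move=> s y i sT; apply: hfi; [exact: oT | apply: polA; exact: oT].
  - by move=> s y sT; have [] := hbd s y _ (oT _ sT) (polA n' s y (oT _ sT)).
  - by move=> y; have [_ [_ [_ ->]]] := hv n'.
set bst := fun t x => f t x (alpha t x (gradh h (w t) x)).
have wbd : forall t x, 0 <= t <= T -> `|w t x| <= K * expR (1 * (T - t)).
  move=> t' x tT'; apply: (bnd _ _ _ (wsol bst)) => //.
  - by move=> s y i sT; apply: hfi; [exact: oT | exact: (hmin _ _ _ (oT _ sT)).1].
  - move=> s y sT; rewrite /Ham /bst addrK.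
    by have [] := hbd s y _ (oT _ sT) ((hmin s y (gradh h (w s) y) (oT _ sT)).1).
  - by move=> y; have [_ [_ [_ ->]]] := hw.
set a := 4 * dr * N / h.
have a0 : 0 <= a by apply: divr_ge0; [nra | exact: ltW].
have Bbound : forall n t x M, 0 <= t <= T -> (forall y, `|v n t y - w t y| <= M) ->
    0 <= c t x (policy alpha0 alpha h v n.+1 t x) -
      (Ham c f alpha t x (gradh h (w t) x) - dotp (gradh h (w t) x)
         (f t x (policy alpha0 alpha h v n.+1 t x))) <= a * M.
  move=> n' t' x M tT' hM /=.
  set pv := gradh h (v n' t') x; set pw := gradh h (w t') x.
  have Aa1 : A (alpha t' x pv) := (hmin t' x pv tT').1.
  have Aas : A (alpha t' x pw) := (hmin t' x pw tT').1.
  have m1 := minle t' x pv _ tT' Aas.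
  have m2 := minle t' x pw _ tT' Aa1.
  rewrite /Ham -/pw; apply/andP; split; first by lra.
  set f1 := f t' x (alpha t' x pv); set fs := f t' x (alpha t' x pw).
  have e := dotp_sub2 R d pv pw fs f1.
  have M0 : 0 <= M := le_trans (normr_ge0 _) (hM x).
  have hd : dotp (pv - pw) (fs - f1) <= a * M.
    apply: le_trans (ler_norm _) _; apply: le_trans (dotp_bound R d _ _) _.
    have -> : a * M = \sum_(i < d) (M / h * (4 * N)).
      by rewrite sumr_const card_ord -mulr_natl -/dr /a; field; rewrite gt_eqF.
    apply: ler_sum => i _; apply: ler_pM; try exact: normr_ge0.
      rewrite /pv /pw -gradh_B; apply: gradh_bound => //.
    rewrite !mxE; apply: le_trans (ler_normB _ _) _.
    have := hfi t' x _ i tT' Aas; have := hfi t' x _ i tT' Aa1; rewrite -/f1 -/fs; lra.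
  lra.
set ga := 2 * a.
have ga0 : 0 <= ga by rewrite /ga; lra.
set E0 := 2 * K * expR T.
have E00 : 0 <= E0 by apply: mulr_ge0; [lra | exact: expR_ge0].
have ebd : forall n t x, 0 <= t <= T ->
    `|v n t x - w t x| <= E0 * (2 ^+ n)^-1 * expR (ga * (T - t)).
  elim=> [|n' IH] t' x tT'.
    rewrite expr0 invr1 mulr1.
    have e1 : expR (1 * (T - t')) <= expR T by rewrite ler_expR; case/andP: tT'; lra.
    have e2 : 1 <= expR (ga * (T - t')).
      by apply: expge1; apply: mulr_ge0 => //; case/andP: tT'; lra.
    have e3 : E0 <= E0 * expR (ga * (T - t')) by rewrite ler_peMr.
    apply: le_trans (ler_normB _ _) _; apply: le_trans e3.
    have := vbd 0%N t' x tT'; have := wbd t' x tT'.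
    have : K * expR (1 * (T - t')) <= K * expR T by apply: ler_wpM2l.
    rewrite /E0; lra.
  set b1 := fun t x => f t x (policy alpha0 alpha h v n'.+1 t x).
  have hb1 : forall s y i, 0 < s < T -> `|b1 s y 0 i| <= 2 * N.
    by move=> s y i sT; apply: hfi; [exact: oT | apply: polA; exact: oT].
  set be := E0 * (2 ^+ n'.+1)^-1.
  have be0 : 0 <= be by apply: mulr_ge0 => //; rewrite invr_ge0; exact: exprn_ge0.
  set GB := a * (E0 * (2 ^+ n')^-1 * expR (ga * T)).
  have hB : forall s y, 0 < s < T ->
      0 <= c s y (policy alpha0 alpha h v n'.+1 s y) -
        (Ham c f alpha s y (gradh h (w s) y) - dotp (gradh h (w s) y) (b1 s y))
      <= a * (E0 * (2 ^+ n')^-1 * expR (ga * (T - s))).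
    by move=> s y sT; apply: Bbound; [exact: oT | move=> y'; apply: IH; exact: oT].
  have hBG : forall s y, 0 < s < T ->
      `|c s y (policy alpha0 alpha h v n'.+1 s y) -
        (Ham c f alpha s y (gradh h (w s) y) - dotp (gradh h (w s) y) (b1 s y))| <= GB.
    move=> s y sT; have /andP[p1 p2] := hB s y sT.
    rewrite ger0_norm //; apply: le_trans p2 _; rewrite /GB; apply: ler_wpM2l => //.
    apply: ler_wpM2l; first by apply: mulr_ge0 => //; rewrite invr_ge0; exact: exprn_ge0.
    by rewrite ler_expR; apply: ler_wpM2l => //; case/andP: sT; lra.
  have eqga : forall s, ga * (be * expR (ga * (T - s))) =
      a * (E0 * (2 ^+ n')^-1 * expR (ga * (T - s))).
    move=> s; rewrite /ga /be exprS invfM; field.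
    by apply: expf_neq0; apply/eqP => H; lra.
  have es := lsol_diff R d T N h _ _ b1 _ _ (vsol n'.+1) (wsol b1).
  have up : v n'.+1 t' x - w t' x <= be * expR (ga * (T - t')).
    apply: (MPl R d T N h be ga _ _ _ es h0 N0 ga0 be0 hb1) => //.
    - by exists GB => s y sT; exact: hBG.
    - by move=> s y sT; rewrite eqga; case/andP: (hB s y sT) => _ H.
    - move=> y; have [_ [_ [_ ->]]] := hv n'.+1; have [_ [_ [_ ->]]] := hw.
      by rewrite subrr.
  have es' := lsol_diff R d T N h _ _ b1 _ _ (wsol b1) (vsol n'.+1).
  have lo : w t' x - v n'.+1 t' x <= 0 * expR (ga * (T - t')).
    apply: (MPl R d T N h 0 ga _ _ _ es' h0 N0 ga0 (lexx 0) hb1) => //.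
    - by exists GB => s y sT; rewrite distrC; exact: hBG.
    - move=> s y sT; rewrite mul0r mulr0; case/andP: (hB s y sT) => p1 _ /=; lra.
    - move=> y; have [_ [_ [_ ->]]] := hv n'.+1; have [_ [_ [_ ->]]] := hw.
      by rewrite subrr.
  rewrite mul0r in lo.
  have : 0 <= be * expR (ga * (T - t')) by apply: mulr_ge0 => //; exact: expR_ge0.
  move=> H0; rewrite ler_norml; apply/andP; split; lra.
set M := E0 * (2 ^+ n)^-1 * expR (ga * T).
have M0 : 0 <= M.
  by apply: mulr_ge0; [apply: mulr_ge0 => //; rewrite invr_ge0; exact: exprn_ge0 | exact: expR_ge0].
set Q := K ^+ 2 * dr * (M / h) ^+ 2.
have Q0 : 0 <= Q.
  by apply: mulr_ge0; [apply: mulr_ge0; [exact: sqr_ge0 | lra] | exact: sqr_ge0].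
have pwb : forall x, (enorm (alpha t x (gradh h (v n t) x) - alpha t x (gradh h (w t) x))) ^+ 2 <= Q.
  move=> x; set pv := gradh h (v n t) x; set pw := gradh h (w t) x.
  have L := hlipa t t x x pv pw tT tT.
  rewrite !subrr normr0 enorm_zero !add0r in L.
  have eb : enorm (pv - pw) ^+ 2 <= dr * (M / h) ^+ 2.
    rewrite enorm_sqr.
    have -> : dr * (M / h) ^+ 2 = \sum_(i < d) (M / h) ^+ 2.
      by rewrite sumr_const card_ord -mulr_natl.
    apply: ler_sum => i _.
    have hc : `|(pv - pw) 0 i| <= M / h.
      rewrite /pv /pw -gradh_B; apply: gradh_bound => // y.
      apply: le_trans (ebd n t y tT) _; rewrite /M; apply: ler_wpM2l.
        by apply: mulr_ge0 => //; rewrite invr_ge0; exact: exprn_ge0.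
      by rewrite ler_expR; apply: ler_wpM2l => //; case/andP: tT; lra.
    move: hc; rewrite ler_norml => /andP[hc1 hc2].
    have : 0 <= M / h by apply: divr_ge0 => //; exact: ltW.
    move=> Mh; rewrite !expr2; nra.
  have en0 : 0 <= enorm (alpha t x pv - alpha t x pw) by exact: sqrtr_ge0.
  have en1 : 0 <= enorm (pv - pw) by exact: sqrtr_ge0.
  have : enorm (alpha t x pv - alpha t x pw) ^+ 2 <= K ^+ 2 * enorm (pv - pw) ^+ 2.
    rewrite !expr2; nra.
  move=> H; apply: le_trans H _; rewrite /Q -mulrA; apply: ler_wpM2l => //; exact: sqr_ge0.
have Rr0 : 0 <= Rr by lra.
rewrite /integral_Rd.
apply: le_trans (iint_bound R d _ Q Rr Q0 Rr0 _ _) _.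
- move=> y; case: ifPn => _ //; rewrite lee_fin; exact: sqr_ge0.
- move=> y; case: ifPn => H.
    have -> : [forall i, `|y i| <= Rr].
      apply/forallP => i; have := comp_le_enorm R d (\row_i0 y i0) i.
      by rewrite mxE => H2; apply: le_trans H2 H.
    by rewrite lee_fin; apply: pwb.
  by case: ifPn => _; rewrite lee_fin.
rewrite lee_fin.
set X := expR (C * expR (C * T) / h).
set tn := (2 ^+ n : R)^-1.
have tn0 : 0 <= tn by rewrite invr_ge0; exact: exprn_ge0.
have tn1 : tn <= 1.
  by rewrite invf_le1 ?exprn_gt0 // exprn_ege1 //; lra.
set P := expR T * expR (ga * T) / h.
have P0 : 0 <= P.
  by apply: divr_ge0; [apply: mulr_ge0; exact: expR_ge0 | exact: ltW].
have eM : M / h = 2 * K * tn * P by rewrite /M /E0 /P /tn; ring.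
set Y := T + ga * T + h^-1.
have PY : P <= expR Y.
  rewrite /Y !expRD /P; apply: ler_wpM2l; first by apply: mulr_ge0; exact: expR_ge0.
  by apply: le_trans (expR_ge1Dx _); lra.
have dN : 0 <= dr * N by apply: mulr_ge0; lra.
have C1 : 1 <= C by lra.
have gah : ga * h = 8 * dr * N by rewrite /ga /a; field; rewrite gt_eqF.
have Y2 : Y + Y <= C * expR (C * T) / h.
  rewrite ler_pdivlMr //.
  have e1 : 1 + C * T <= expR (C * T) := expR_ge1Dx _.
  have : (Y + Y) * h = 2 * T * h + 2 * (ga * h) * T + 2.
    by rewrite /Y; field; rewrite gt_eqF.
  move=> ->; rewrite gah.
  have hT : T * h <= T by rewrite -[leRHS]mulr1; apply: ler_wpM2l; lra.
  have CT : 0 <= T by lra.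
  have f1 : C * (1 + C * T) <= C * expR (C * T) by apply: ler_wpM2l; lra.
  have f2 : C * T * 1 <= C * T * C by apply: ler_wpM2l => //; apply: mulr_ge0; lra.
  have f3 : (2 + 16 * dr * N) * T <= C * T by apply: ler_wpM2r; lra.
  lra.
have PX : P ^+ 2 <= X.
  apply: le_trans (_ : expR (Y + Y) <= X).
    rewrite expRD expr2; apply: ler_pM => //.
  by rewrite /X ler_expR.
have hMh : (M / h) ^+ 2 <= 4 * K ^+ 2 * tn * X.
  rewrite eM.
  have : tn ^+ 2 <= tn by rewrite expr2 -[leRHS]mulr1; apply: ler_wpM2l.
  move=> t2.
  have -> : (2 * K * tn * P) ^+ 2 = 4 * K ^+ 2 * tn ^+ 2 * P ^+ 2 by ring.
  apply: ler_pM; [|exact: sqr_ge0| |exact: PX].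
    by apply: mulr_ge0; [apply: mulr_ge0; [lra | exact: sqr_ge0] | exact: sqr_ge0].
  apply: ler_wpM2l => //; apply: mulr_ge0; [lra | exact: sqr_ge0].
have X0 : 0 <= X by exact: expR_ge0.
have Rd0 : 0 <= Rr ^+ d by apply: exprn_ge0.
have Cb : 4 * K ^+ 4 * dr * 2 ^+ d <= C.
  rewrite /C; lra.
have -> : (2 * Rr) ^+ d = 2 ^+ d * Rr ^+ d by rewrite exprMn.
rewrite /Q.
apply: le_trans (_ : K ^+ 2 * dr * (4 * K ^+ 2 * tn * X) * (2 ^+ d * Rr ^+ d) <= _).
  apply: ler_wpM2r; first by apply: mulr_ge0 => //; exact: exprn_ge0.
  apply: ler_wpM2l => //; apply: mulr_ge0; [exact: sqr_ge0 | lra].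
have -> : K ^+ 2 * dr * (4 * K ^+ 2 * tn * X) * (2 ^+ d * Rr ^+ d) =
    (4 * K ^+ 4 * dr * 2 ^+ d) * tn * X * Rr ^+ d by ring.
apply: ler_wpM2r => //; apply: ler_wpM2r => //; apply: ler_wpM2r => //.
Qed.
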